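(* Let $A$ be an $n\times n$ row substochastic matrix with at most one positive entry in each row. (1) If $A$ has an even number $2t$ of positive entries, then there is a listing $x_1,\dots,x_{2t}$ of these positive entries (each entry listed exactly once) such that $$\operatorname{per}(I-A)\le (1+x_1x_2)(1+x_3x_4)\cdots(1+x_{2t-1}x_{2t}).$$ (2) If $A$ has an odd number $2t+1$ of positive entries, then there is a listing $x_1,\dots,x_{2t+1}$ of these positive entries such that $$\operatorname{per}(I-A)< (1+x_1x_2)(1+x_3x_4)\cdots(1+x_{2t-1}x_{2t})\Big(1+\frac{x_{2t+1}^2}{4}\Big).$$
   Context: An $n\times n$ matrix is row substochastic if all its entries are nonnegative and each row sum is at most $1$. The permanent is $\operatorname{per}(M)=\sum_{\pi\in S_n}\prod_i m_{i\pi(i)}$, and $I$ is the identity matrix. Empty products equal $1$. *)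

(* Defs.v *)
From HB Require Import structures.
From mathcomp Require Import all_boot all_order all_algebra all_fingroup.
Set Implicit Arguments. Unset Strict Implicit. Unset Printing Implicit Defensive.
Import Order.TTheory GRing.Theory Num.Theory.
Local Open Scope ring_scope.

Definition per (R : comNzRingType) (n : nat) (M : 'M[R]_n) : R :=
  \sum_(s : 'S_n) \prod_(i < n) M i (s i).

Definition row_substochastic (R : realFieldType) (n : nat) (A : 'M[R]_n) : Prop :=
  (forall i j, 0 <= A i j) /\ (forall i, \sum_(j < n) A i j <= 1).

Definition pos_entries (R : realFieldType) (n : nat) (A : 'M[R]_n)
  : {set 'I_n * 'I_n} := [set p | 0 < A p.1 p.2].

Definition entry_values (R : realFieldType) (n : nat) (A : 'M[R]_n)
  (s : seq ('I_n * 'I_n)) : seq R := [seq A p.1 p.2 | p <- s].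

(* Main.v *)
Require Import Defs.
From HB Require Import structures.
From mathcomp Require Import all_boot all_order all_algebra all_fingroup.
From mathcomp Require Import zify.
Import Order.TTheory GRing.Theory Num.Theory.
Local Open Scope ring_scope.
Set Implicit Arguments. Unset Strict Implicit. Unset Printing Implicit Defensive.

Lemma sum_sub (R : numDomainType) (I : finType) (P Q : pred I) (F : I -> R) :
  (forall i, P i -> Q i) -> (forall i, Q i -> 0 <= F i) ->
  \sum_(i | P i) F i <= \sum_(i | Q i) F i.
Proof.
move=> PQ F0; rewrite [X in _ <= X](bigID P) /=.
rewrite (eq_bigl P); last first.
  by move=> i; case Pi: (P i); rewrite ?andbF ?andbT ?PQ.
rewrite lerDl; apply: sumr_ge0 => i /andP[Qi _]; exact: F0.
Qed.

Definition closedS n (f : 'I_n -> 'I_n) (M : {set 'I_n}) (pos : pred 'I_n) : bool :=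
  [forall i in M, [&& pos i, f i != i & f i \in M]] &&
  [forall i in M, forall j in M, (f i == f j) ==> (i == j)].

Lemma closedP n f (M : {set 'I_n}) pos : closedS f M pos <->
  ((forall i, i \in M -> [/\ pos i, f i != i & f i \in M]) /\
   (forall i j, i \in M -> j \in M -> f i = f j -> i = j)).
Proof.
split.
  move/andP=> [/forall_inP H1 /forall_inP H2]; split.
    by move=> i /H1 /and3P[? ? ?].
  move=> i j Hi Hj E; move: (H2 i Hi) => /forall_inP /(_ j Hj) /implyP.
  by rewrite E eqxx => /(_ isT) /eqP.
move=> [H1 H2]; apply/andP; split.
  by apply/forall_inP => i /H1 [? ? ?]; apply/and3P.
apply/forall_inP => i Hi; apply/forall_inP => j Hj; apply/implyP => /eqP E.
by apply/eqP; apply: H2.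
Qed.

Definition WW (R : realFieldType) n (a : 'I_n -> R) (M : {set 'I_n}) :=
  \prod_(i in M) a i.
Definition ZZ (R : realFieldType) n (f : 'I_n -> 'I_n) (a : 'I_n -> R) (U : {set 'I_n}) :=
  \sum_(M : {set 'I_n} | closedS f M (fun i => 0 < a i) && (M \subset U)) WW a M.

Lemma closedI n f (M C : {set 'I_n}) pos :
  closedS f M pos -> closedS f C pos -> closedS f (M :&: C) pos.
Proof.
move=> /closedP [M1 M2] /closedP [C1 C2]; apply/closedP; split.
  move=> i; rewrite in_setI => /andP[/M1 [? ? ?] /C1 [? ? ?]].
  by split => //; rewrite in_setI; apply/andP.
move=> i j; rewrite !in_setI => /andP[Hi _] /andP[Hj _]; exact: M2.
Qed.

Lemma closed_surj n f (C : {set 'I_n}) pos y :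
  closedS f C pos -> y \in C -> exists2 j, j \in C & f j = y.
Proof.
move=> /closedP [C1 C2] yC.
have sub : f @: C \subset C by apply/subsetP => z /imsetP [j jC ->]; case: (C1 j jC).
have card : #|f @: C| = #|C| by apply: card_in_imset => i j Hi Hj; exact: C2.
have E : f @: C = C.
  apply/eqP; move: (subset_leqif_cards sub) => /geq_leqif <-; by rewrite card.
have : y \in f @: C by rewrite E.
by case/imsetP => j jC ->; exists j.
Qed.

Lemma closedD n f (M C : {set 'I_n}) pos :
  closedS f M pos -> closedS f C pos -> C \subset M -> closedS f (M :\: C) pos.
Proof.
move=> cM cC sCM; have := cM; move/closedP => [M1 M2]; have := cC; move/closedP => [C1 C2].
apply/closedP; split.
  move=> i; rewrite in_setD => /andP[iC iM]; have [? ? fiM] := M1 i iM.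
  split => //; rewrite in_setD fiM andbT; apply/negP => fiC.
  have [j jC E] := closed_surj cC fiC.
  have jM : j \in M by apply: (subsetP sCM).
  by move: iC; rewrite (M2 _ _ iM jM (esym E)) jC.
move=> i j; rewrite !in_setD => /andP[_ Hi] /andP[_ Hj]; exact: M2.
Qed.

Lemma WW_ge0 (R : realFieldType) n (a : 'I_n -> R) (M : {set 'I_n}) :
  (forall i, 0 <= a i) -> 0 <= WW a M.
Proof. by move=> ha; apply: prodr_ge0 => i _. Qed.

Lemma ZZ_ge0 (R : realFieldType) n f (a : 'I_n -> R) (U : {set 'I_n}) :
  (forall i, 0 <= a i) -> 0 <= ZZ f a U.
Proof. by move=> ha; apply: sumr_ge0 => M _; apply: WW_ge0. Qed.

Lemma ZZ_none (R : realFieldType) n f (a : 'I_n -> R) (U : {set 'I_n}) :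
  (forall C, closedS f C (fun i => 0 < a i) -> C \subset U -> C = set0) ->
  ZZ f a U <= 1.
Proof.
move=> H; rewrite /ZZ (eq_bigl (fun M => M == set0)).
  by rewrite big_pred1_eq /WW big_set0.
move=> M; apply/idP/idP.
  by move=> /andP[cM sMU]; rewrite (H _ cM sMU).
move/eqP => ->; rewrite sub0set andbT; apply/closedP; split => i; by rewrite inE.
Qed.

Lemma WW_pair (R : realFieldType) n (a : 'I_n -> R) (C : {set 'I_n}) c d :
  (forall i, 0 <= a i <= 1) -> c \in C -> d \in C -> d != c ->
  WW a C <= a c * a d.
Proof.
move=> ha cC dC dc; rewrite /WW (bigD1 c) //= (bigD1 d) /=; last by rewrite dC dc.
have h0 : forall i, 0 <= a i by move=> i; case/andP: (ha i).
rewrite mulrA -[X in _ <= X]mulr1 ler_pM ?mulr_ge0 //; first by apply: prodr_ge0 => i _.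
by apply: prodr_ile1 => i _.
Qed.

Definition pprod (R : realFieldType) (v : seq R) (q : nat) :=
  \prod_(k < q) (1 + v`_(2 * k) * v`_(2 * k).+1).

Lemma pprod_ge1 (R : realFieldType) (v : seq R) q :
  (forall k, 0 <= v`_k) -> 1 <= pprod v q.
Proof.
move=> hv; rewrite /pprod; elim/big_ind: _ => //.
  by move=> x y hx hy; rewrite -[1](mulr1 1) ler_pM.
by move=> k _; rewrite lerDl mulr_ge0.
Qed.

Lemma ZZ_bound (R : realFieldType) n f (a : 'I_n -> R) :
  (forall i, 0 <= a i <= 1) -> forall m (U : {set 'I_n}), (#|U| <= m)%N ->
  exists r : seq 'I_n, exists q : nat,
    [/\ size r = (2 * q)%N, uniq r, {subset r <= U}, (forall i, i \in r -> 0 < a i)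
      & ZZ f a U <= pprod (map a r) q].
Proof.
move=> ha; have h0 : forall i, 0 <= a i by move=> i; case/andP: (ha i).
set pos := fun i => 0 < a i.
elim=> [|m IH] U HU.
  exists [::], 0%N; split => //.
  rewrite /pprod big_ord0; apply: ZZ_none => C _ sCU.
  apply/eqP; rewrite -subset0; apply: subset_trans sCU _.
  by move: HU; rewrite leqn0 cards_eq0 => /eqP ->.
pose P C := [&& closedS f C pos, C \subset U & C != set0].
case: (pickP P) => [C0 PC0|noC]; last first.
  exists [::], 0%N; split => //.
  rewrite /pprod big_ord0; apply: ZZ_none => C cC sCU.
  by apply/eqP; move: (noC C); rewrite /P cC sCU /= => /negbFE.
case: (arg_minnP (fun C : {set 'I_n} => #|C|) PC0) => C /and3P[cC sCU nC] minC.
have := cC; move/closedP => [C1 C2].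
case/set0Pn: nC => c cinC.
have [pc fcc fcC] := C1 c cinC.
have [pfc _ _] := C1 (f c) fcC.
have cU : c \in U by apply: (subsetP sCU).
have HUC : (#|U :\: C| <= m)%N.
  rewrite -ltnS; apply: leq_trans HU; apply: proper_card; apply/properP; split.
    exact: subsetDl.
  by exists c => //; rewrite in_setD cinC.
have [r [q [sr ur subr posr Zr]]] := IH _ HUC.
exists [:: c, f c & r], q.+1; split.
- by rewrite /= sr mulnS add2n.
- rewrite /= ur andbT inE negb_or eq_sym fcc /=.
  apply/andP; split; apply/negP => /subr; rewrite in_setD ?cinC ?fcC //.
- move=> i; rewrite !inE => /or3P [/eqP->|/eqP->|/subr]; first by [].
    exact: (subsetP sCU).
  by rewrite in_setD => /andP[].
- by move=> i; rewrite !inE => /or3P [/eqP->|/eqP->|/posr].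
have dich : forall M, closedS f M pos -> M \subset U -> ~~ (C \subset M) -> M :&: C = set0.
  move=> M cM sMU nCM; apply/eqP; apply/negPn/negP => ne.
  have PMC : P (M :&: C) by rewrite /P closedI // ne andbT (subset_trans (subsetIl _ _) sMU).
  have := minC _ PMC; rewrite (geq_leqif (subset_leqif_cards (subsetIr M C))) => /eqP E.
  by move: nCM; rewrite -E subsetIl.
have Z' := ZZ_ge0 f (U :\: C) h0.
have step : ZZ f a U <= (1 + WW a C) * ZZ f a (U :\: C).
  rewrite /ZZ (bigID (fun M : {set 'I_n} => C \subset M)) /= mulrDl mul1r addrC.
  apply: lerD.
  - apply: sum_sub => [M /andP[/andP[cM sMU] nCM]|M _]; last exact: WW_ge0.
    rewrite cM /= subsetD sMU /= -setI_eq0; apply/eqP; exact: dich.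
  - rewrite (eq_bigr (fun M => WW a C * WW a (M :\: C))); last first.
      by move=> M /andP[_ sCM]; rewrite /WW (big_setID C) /= (setIidPr sCM).
    rewrite -mulr_sumr ler_wpM2l ?WW_ge0 //.
    set A := [pred M : {set 'I_n} | (closedS f M pos && (M \subset U)) && (C \subset M)].
    have -> : \sum_(M | (closedS f M pos && (M \subset U)) && (C \subset M)) WW a (M :\: C)
       = \sum_(N in [set M :\: C | M in A]) WW a N.
      rewrite big_imset /=; first by apply: eq_bigl.
      move=> M1 M2; rewrite !inE => /andP[_ s1] /andP[_ s2] E.
      apply/setP => x; case xC: (x \in C); first by rewrite (subsetP s1) ?(subsetP s2).
      by move/setP: E => /(_ x); rewrite !in_setD xC.
    apply: sum_sub => [N /imsetP [M /andP[/andP[cM sMU] sCM] ->]|N _]; last exact: WW_ge0.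
    by rewrite closedD // setSD.
apply: (le_trans step).
rewrite /pprod big_ord_recl.
apply: ler_pM => //.
- by rewrite addr_ge0 ?WW_ge0.
- by rewrite muln0 /= lerD2l; apply: WW_pair.
- apply: (le_trans Zr); rewrite /pprod le_eqVlt; apply/orP; left; apply/eqP.
  by apply: eq_bigr => k _; rewrite lift0 mulnS add2n.
Qed.

Definition fA (R : realFieldType) n (A : 'M[R]_n) (i : 'I_n) : 'I_n :=
  if [pick j | 0 < A i j] is Some j then j else i.
Definition aA (R : realFieldType) n (A : 'M[R]_n) (i : 'I_n) : R := A i (fA A i).

Lemma fA_spec (R : realFieldType) n (A : 'M[R]_n)
  (hrow : forall i j1 j2, 0 < A i j1 -> 0 < A i j2 -> j1 = j2) i j :
  0 < A i j -> j = fA A i.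
Proof.
rewrite /fA; case: pickP => [k Hk|H] Hij; first exact: hrow Hij Hk.
by move: (H j); rewrite Hij.
Qed.

Lemma A_le1 (R : realFieldType) n (A : 'M[R]_n) (hA : row_substochastic A) i j :
  A i j <= 1.
Proof.
case: hA => h0 h1; apply: le_trans (h1 i).
by rewrite (bigD1 j) //= lerDl sumr_ge0.
Qed.

Lemma per_le (R : realFieldType) n (A : 'M[R]_n) (hA : row_substochastic A)
  (hrow : forall i j1 j2, 0 < A i j1 -> 0 < A i j2 -> j1 = j2) :
  per (1%:M - A) <= ZZ (fA A) (aA A) setT.
Proof.
have h0 := hA.1.
pose PP (s : 'S_n) := [forall i, (s i != i) ==> (0 < A i (s i))].
pose mv (s : 'S_n) := [set i | s i != i].
have Hs : forall s i, PP s -> s i != i -> s i = fA A i /\ 0 < aA A i.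
  move=> s i /forallP /(_ i) /implyP H si; have := H si => P.
  have E := fA_spec hrow P; split => //; by rewrite /aA -E.
have tb : forall s : 'S_n, \prod_i `|(1%:M - A) i (s i)| <=
    if PP s then WW (aA A) (mv s) else 0.
  move=> s; case: ifP => Ps.
    rewrite /WW (bigID (fun i => s i != i)) /=.
    rewrite [X in _ <= X](eq_bigl (fun i => s i != i)); last by move=> i; rewrite /mv inE.
    rewrite -[X in _ <= X]mulr1 ler_pM //.
    - by apply: prodr_ge0 => i _.
    - by apply: prodr_ge0 => i _.
    - rewrite le_eqVlt; apply/orP; left; apply/eqP; apply: eq_bigr => i si.
      have [E _] := Hs s i Ps si.
      rewrite !mxE eq_sym (negbTE si) /= sub0r normrN E ger0_norm //.
    - apply: prodr_ile1 => i /negPn /eqP si.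
      rewrite si !mxE eqxx /= ger0_norm ?subr_ge0 ?A_le1 //.
      by rewrite /= gerBl h0.
  move/negbT: Ps; rewrite negb_forall => /existsP [i]; rewrite negb_imply.
  move=> /andP[si npos].
  have A0 : A i (s i) = 0 by apply/eqP; rewrite eq_le h0 andbT leNgt.
  rewrite (bigD1 i) //= !mxE eq_sym (negbTE si) /= sub0r A0 oppr0 normr0 mul0r.
  exact: lexx.
have cl : forall s, PP s -> closedS (fA A) (mv s) (fun i => 0 < aA A i).
  move=> s Ps; apply/closedP; split.
    move=> i; rewrite inE => si; have [E P] := Hs s i Ps si.
    split => //; rewrite -E //; rewrite inE; apply/negP => /eqP E2.
    by move: si; rewrite (perm_inj E2) eqxx.
  move=> i j; rewrite !inE => si sj.
  have [E1 _] := Hs s i Ps si; have [E2 _] := Hs s j Ps sj.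
  by rewrite -E1 -E2; apply: perm_inj.
apply: (le_trans (ler_norm _)); rewrite /per.
apply: (le_trans (ler_norm_sum _ _ _)).
apply: le_trans (_ : \sum_s (if PP s then WW (aA A) (mv s) else 0) <= _).
  by apply: ler_sum => s _; rewrite normr_prod; apply: tb.
rewrite -big_mkcond /=.
have -> : \sum_(s | PP s) WW (aA A) (mv s) =
    \sum_(M in [set mv s | s in [pred s | PP s]]) WW (aA A) M.
  rewrite big_imset /=; first by apply: eq_bigl.
  move=> s1 s2; rewrite !inE => P1 P2 E; apply/permP => x.
  move/setP: E => /(_ x); rewrite /mv !inE /=.
  case: (boolP (s1 x != x)) => h1; case: (boolP (s2 x != x)) => h2 //= _.
    by have [-> _] := Hs s1 x P1 h1; have [-> _] := Hs s2 x P2 h2.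
  by rewrite (eqP (negbNE h1)) (eqP (negbNE h2)).
apply: sum_sub => [M /imsetP [s Ps ->]|M _].
  by rewrite cl ?subsetT //; move: Ps; rewrite inE.
by apply: WW_ge0 => i; rewrite /aA.
Qed.

Lemma nth_ge0 (R : realFieldType) (v : seq R) k :
  all (fun x => 0 <= x) v -> 0 <= v`_k.
Proof.
move=> /allP H; case: (ltnP k (size v)) => hk; first by apply: H; apply: mem_nth.
by rewrite nth_default.
Qed.

Lemma pprod_cat (R : realFieldType) (w v : seq R) q t :
  size w = (2 * q)%N -> (q <= t)%N -> all (fun x => 0 <= x) (w ++ v) ->
  pprod w q <= pprod (w ++ v) t.
Proof.
move=> sw qt hv; rewrite /pprod -(big_mkord xpredT (fun k : nat => 1 + w`_(2 * k) * w`_(2 * k).+1)).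
rewrite -(big_mkord xpredT (fun k : nat => 1 + (w ++ v)`_(2 * k) * (w ++ v)`_(2 * k).+1)).
rewrite (@big_cat_nat _ _ _ q 0 t) /=; last by []; last by [].
rewrite -[X in X <= _]mulr1 ler_pM //.
- by apply: prodr_ge0 => k _; rewrite addr_ge0 ?mulr_ge0 //; apply: nth_ge0;
    move: hv; rewrite all_cat => /andP[].
- rewrite le_eqVlt; apply/orP; left; apply/eqP.
  rewrite !big_nat; apply: eq_bigr => k /andP[_ kq].
  rewrite !nth_cat sw.
  have h1 : (2 * k < 2 * q)%N by lia.
  have h2 : ((2 * k).+1 < 2 * q)%N by lia.
  by rewrite h1 h2.
- elim/big_ind: _ => //.
    by move=> x y hx hy; rewrite -[1](mulr1 1) ler_pM.
  by move=> k _; rewrite lerDl mulr_ge0 // nth_ge0.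
Qed.

Unset Implicit Arguments.
Theorem mainTheorem8 (R : realFieldType) (n : nat) (A : 'M[R]_n)
  (hA : row_substochastic A)
  (hrow : forall i j1 j2, 0 < A i j1 -> 0 < A i j2 -> j1 = j2) :
  (forall t : nat, #|pos_entries A| = (2 * t)%N ->
     exists s : seq ('I_n * 'I_n),
       perm_eq s (enum (pos_entries A)) /\
       per (1%:M - A) <=
         \prod_(k < t) (1 + (entry_values A s)`_(2 * k) * (entry_values A s)`_(2 * k).+1))
  /\
  (forall t : nat, #|pos_entries A| = (2 * t).+1 ->
     exists s : seq ('I_n * 'I_n),
       perm_eq s (enum (pos_entries A)) /\
       per (1%:M - A) <
         (\prod_(k < t) (1 + (entry_values A s)`_(2 * k) * (entry_values A s)`_(2 * k).+1))
         * (1 + (entry_values A s)`_(2 * t) ^+ 2 / 4)).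
Proof.
have h0 := hA.1.
have ha : forall i, 0 <= aA A i <= 1 by move=> i; rewrite /aA h0 A_le1.
have [r [q [sr ur _ posr Zr]]] := ZZ_bound (fA A) ha (leqnn #|[set: 'I_n]|).
have Hper : per (1%:M - A) <= pprod (map (aA A) r) q := le_trans (per_le hA hrow) Zr.
pose rest := [seq i <- enum 'I_n | (0 < aA A i) && (i \notin r)].
pose s := map (fun i => (i, fA A i)) (r ++ rest).
have posall : forall i, i \in r ++ rest -> 0 < aA A i.
  move=> i; rewrite mem_cat => /orP [/posr //|]; rewrite mem_filter.
  by case/andP => /andP[].
have Hperm : perm_eq s (enum (pos_entries A)).
  apply: uniq_perm.
  - rewrite map_inj_uniq; last by move=> i j [].
    rewrite cat_uniq ur filter_uniq ?enum_uniq // andbT /=.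
    apply/hasPn => x; rewrite mem_filter => /andP[/andP[_ xr] _]; exact: xr.
  - exact: enum_uniq.
  move=> p; rewrite mem_enum inE; apply/mapP/idP.
    by move=> [x xin ->] /=; apply: posall.
  case: p => i j /= H; exists i => //; last by rewrite -(fA_spec hrow H).
  rewrite mem_cat; case: (boolP (i \in r)) => //= nir.
  rewrite mem_filter nir mem_enum andbT /=.
  by rewrite /aA -(fA_spec hrow H) H.
have Hev : entry_values A s = map (aA A) (r ++ rest).
  by rewrite /entry_values /s -map_comp.
have Hsize : size (r ++ rest) = #|pos_entries A|.
  by rewrite -(size_map (fun i => (i, fA A i))) (perm_size Hperm) -cardE.
have nonneg : all (fun x => 0 <= x) (map (aA A) r ++ map (aA A) rest).
  rewrite -map_cat; apply/allP => x /mapP [i _ ->]; by rewrite /aA h0.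
split => t Ht; exists s; split => //; rewrite Hev map_cat.
- apply: (le_trans Hper); apply: pprod_cat => //; first by rewrite size_map.
  move: Hsize; rewrite Ht size_cat sr; lia.
- have Hle : per (1%:M - A) <= pprod (map (aA A) r ++ map (aA A) rest) t.
    apply: (le_trans Hper); apply: pprod_cat => //; first by rewrite size_map.
    move: Hsize; rewrite Ht size_cat sr; lia.
  have P1 : 1 <= pprod (map (aA A) r ++ map (aA A) rest) t.
    by apply: pprod_ge1 => k; apply: nth_ge0.
  apply: (le_lt_trans Hle); rewrite /pprod ltr_pMr; last by apply: lt_le_trans P1.
  rewrite ltrDl divr_gt0 // exprn_gt0 //.
  have hk : (2 * t < size (map (aA A) r ++ map (aA A) rest))%N.
    by rewrite -map_cat size_map Hsize Ht.
  have := mem_nth 0 hk; rewrite -map_cat => /mapP [i iin ->].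
  exact: posall.
Qed.
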